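(* Let $n\ge 2$, let $F_n$ be the free group on $x_1,\dots,x_n$, let $PW_n$ be the welded pure braid (McCool) group with generators $\xi_{i,j}$ ($1\le i\neq j\le n$), and let $F_n\rtimes PW_n$ be the semidirect product described in the context. For $1\le i\neq j\le n$ let $M_{i,j}$ be the $n\times n$ matrix over the group algebra $\mathbb{C}[F_n\rtimes PW_n]$ which equals the identity matrix except in its $i$-th row, whose $(i,i)$ entry is $x_j$, whose $(i,j)$ entry is $1-x_jx_ix_j^{-1}$, and whose other entries are $0$; and let $\mathcal{C}(\xi_{i,j})=\xi_{i,j}\cdot M_{i,j}$ be the matrix obtained by left-multiplying every entry of $M_{i,j}$ by $\xi_{i,j}$. Then the assignment $\xi_{i,j}\mapsto\mathcal{C}(\xi_{i,j})$ determines a faithful (injective) matrix representation $\Psi_n:PW_n\to GL(n,\mathbb{C}[F_n\rtimes PW_n])$.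
   Context: The group $PW_n$ is given by generators $\xi_{i,j}$, $1\le i\neq j\le n$, subject to the McCool relations: $[\xi_{i,j},\xi_{s,t}]=1$ if $\{i,j\}\cap\{s,t\}=\emptyset$; $[\xi_{i,j},\xi_{k,j}]=1$ for $i,j,k$ distinct; $[\xi_{i,j}\xi_{k,j},\xi_{i,k}]=1$ for $i,j,k$ distinct, where $[a,b]=a^{-1}b^{-1}ab$. (Equivalently, $PW_n$ is the kernel of the map from the welded braid group $WB_n$ to the symmetric group sending $\sigma_i,\tau_i\mapsto\tau_i$.) For each generator, let $\varphi_{i,j}$ be the automorphism of $F_n$ with $\varphi_{i,j}(x_i)=x_jx_ix_j^{-1}$ and $\varphi_{i,j}(x_k)=x_k$ for $k\neq i$. The semidirect product $F_n\rtimes PW_n$ is the group generated by $F_n$ and $PW_n$, containing $F_n$ as a normal subgroup with $(F_n\rtimes PW_n)/F_n\cong PW_n$, in which $\xi_{i,j}^{-1}\,x_k\,\xi_{i,j}=\varphi_{i,j}(x_k)$ for all $k$ (this is the semidirect product coming from the faithful Artin embedding of $PW_n$ into $\mathrm{Aut}(F_n)$). Matrices are multiplied in the usual way over the noncommutative ring $\mathbb{C}[F_n\rtimes PW_n]$. *)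

(* Defs.v *)
From HB Require Import structures.
From mathcomp Require Import all_boot all_order all_algebra.
From mathcomp Require Import boolp Rstruct complex.

Set Implicit Arguments.
Unset Strict Implicit.
Unset Printing Implicit Defensive.

Import GRing.Theory.
Local Open Scope ring_scope.

Notation CC := (Rdefinitions.R[i]).

(* A word over an alphabet A is a list of letters (a, b); (a, false)    *)
(* stands for the generator a and (a, true) for its inverse a^-1.       *)
Definition word (A : Type) := seq (A * bool).

Definition inv_letter (A : Type) (l : A * bool) : A * bool := (l.1, ~~ l.2).
Definition inv_word (A : Type) (w : word A) : word A := rev (map (@inv_letter A) w).
Definition gen_word (A : Type) (a : A) : word A := [:: (a, false)].

Definition comm_word (A : Type) (a b : word A) : word A :=
  inv_word a ++ inv_word b ++ a ++ b.

(* grp_eq rel u v : u and v represent the same element of the group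
   < A | r = 1 (rel r) >, i.e. the congruence on the free monoid over
   A x bool generated by free cancellation and the relators. *)
Inductive grp_eq (A : Type) (rel : word A -> Prop) : word A -> word A -> Prop :=
| ge_refl w : grp_eq rel w w
| ge_sym u v : grp_eq rel u v -> grp_eq rel v u
| ge_trans u v w : grp_eq rel u v -> grp_eq rel v w -> grp_eq rel u w
| ge_ctx a b u v : grp_eq rel u v -> grp_eq rel (a ++ u ++ b) (a ++ v ++ b)
| ge_cancel l : grp_eq rel [:: l; inv_letter l] [::]
| ge_rel r : rel r -> grp_eq rel r [::].

(* generators xi_{i,j}, 1 <= i <> j <= n (indices shifted to 'I_n) *)
Definition pwgen (n : nat) := {p : 'I_n * 'I_n | p.1 != p.2}.

(* the one-letter word xi_{i,j} (the empty word if i = j, never used) *)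
Definition xiw (n : nat) (i j : 'I_n) : word (pwgen n) :=
  match insub (i, j) with Some g => gen_word g | None => [::] end.

Definition mccool_rel (n : nat) (r : word (pwgen n)) : Prop :=
  (exists i j s t : 'I_n,
     [&& i != j, s != t, i != s, i != t, j != s & j != t] /\
     r = comm_word (xiw i j) (xiw s t)) \/
  (exists i j k : 'I_n,
     [&& i != j, j != k & i != k] /\
     r = comm_word (xiw i j) (xiw k j)) \/
  (exists i j k : 'I_n,
     [&& i != j, j != k & i != k] /\
     r = comm_word (xiw i j ++ xiw k j) (xiw i k)).

Definition PW_eq (n : nat) : word (pwgen n) -> word (pwgen n) -> Prop :=
  grp_eq (@mccool_rel n).

(* The semidirect product G = F_n x| PW_n, presented by the generators  *)
(* x_k of F_n and xi_{i,j} of PW_n, the McCool relations, and the       *)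
(* relations xi_{i,j}^-1 x_k xi_{i,j} = phi_{i,j}(x_k).                 *)
Inductive sdgen (n : nat) : Type :=
| SX of 'I_n
| SXi of pwgen n.

Definition xw (n : nat) (k : 'I_n) : word (sdgen n) := gen_word (SX k).

Definition lift_pw (n : nat) (w : word (pwgen n)) : word (sdgen n) :=
  map (fun l => (SXi l.1, l.2)) w.

Definition phiw (n : nat) (i j k : 'I_n) : word (sdgen n) :=
  if k == i then xw j ++ xw i ++ inv_word (xw j) else xw k.

Definition sd_rel (n : nat) (r : word (sdgen n)) : Prop :=
  (exists r0, mccool_rel r0 /\ r = lift_pw r0) \/
  (exists i j k : 'I_n, i != j /\
     r = inv_word (lift_pw (xiw i j)) ++ xw k ++ lift_pw (xiw i j)
           ++ inv_word (phiw i j k)).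

Definition G_eq (n : nat) : word (sdgen n) -> word (sdgen n) -> Prop :=
  grp_eq (@sd_rel n).

(* The group algebra C[G]: an element is a finite formal sum            *)
(* sum_p c_p g_p, represented by a list of pairs (c_p, g_p) with g_p a  *)
(* word representing an element of G; two formal sums are equal in C[G] *)
(* iff they have the same coefficient at every element of G.            *)
Definition CG (n : nat) := seq (CC * word (sdgen n)).

Definition cg_coef (n : nat) (a : CG n) (g : word (sdgen n)) : CC :=
  \sum_(p <- a | `[< G_eq p.2 g >]) p.1.

Definition cg_eq (n : nat) (a b : CG n) : Prop :=
  forall g : word (sdgen n), cg_coef a g = cg_coef b g.

Definition cg_zero (n : nat) : CG n := [::].
Definition cg_add (n : nat) (a b : CG n) : CG n := a ++ b.
Definition cg_mul (n : nat) (a b : CG n) : CG n :=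
  [seq (p.1 * q.1, p.2 ++ q.2) | p <- a, q <- b].
Definition cg_of (n : nat) (g : word (sdgen n)) : CG n := [:: (1, g)].
Definition cg_scal (n : nat) (c : CC) : CG n := [:: (c, [::])].

Definition cmx (n : nat) := 'M[CG n]_n.

Definition cmx_eq (n : nat) (A B : cmx n) : Prop :=
  forall i j, cg_eq (A i j) (B i j).

Definition cmx_mul (n : nat) (A B : cmx n) : cmx n :=
  \matrix_(i, k) foldr (@cg_add n) (cg_zero n)
                   [seq cg_mul (A i j) (B j k) | j <- enum 'I_n].

Definition cmx_one (n : nat) : cmx n :=
  \matrix_(i, j) if i == j then cg_scal n 1 else cg_zero n.

Definition Mmx (n : nat) (i j : 'I_n) : cmx n :=
  \matrix_(r, c)
    if r == i then
      (if c == i then cg_of (xw j)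
       else if c == j then
         cg_add (cg_scal n 1) (cg_mul (cg_scal n (-1)) (cg_of (xw j ++ xw i ++ inv_word (xw j))))
       else cg_zero n)
    else (if r == c then cg_scal n 1 else cg_zero n).

Definition Cmx (n : nat) (g : pwgen n) : cmx n :=
  let i := (val g).1 in let j := (val g).2 in
  \matrix_(r, c) cg_mul (cg_of (lift_pw (gen_word g))) (Mmx i j r c).

(* Given a choice Dinv g of inverse for each C(g), the image of a word
   of PW_n under xi |-> C(xi), xi^-1 |-> Dinv xi. *)
Fixpoint Psi_word (n : nat) (Dinv : pwgen n -> cmx n) (w : word (pwgen n)) : cmx n :=
  match w with
  | [::] => cmx_one n
  | l :: w' => cmx_mul (if l.2 then Dinv l.1 else Cmx l.1) (Psi_word Dinv w')
  end.

(* Main.v *)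
Require Import Defs.
From mathcomp Require Import all_boot all_order all_algebra.
From mathcomp Require Import boolp Rstruct complex.
From mathcomp Require Import zify ring.
Set Implicit Arguments.
Unset Strict Implicit.
Unset Printing Implicit Defensive.
Import GRing.Theory.
Local Open Scope ring_scope.

Lemma inv_letterK (A : Type) (l : A * bool) : inv_letter (inv_letter l) = l.
Proof. by case: l => a b; rewrite /inv_letter /= negbK. Qed.

Lemma inv_word_cat (A : Type) (u v : word A) :
  inv_word (u ++ v) = inv_word v ++ inv_word u.
Proof. by rewrite /inv_word map_cat rev_cat. Qed.

Lemma inv_wordK (A : Type) (u : word A) : inv_word (inv_word u) = u.
Proof.
rewrite /inv_word map_rev revK -map_comp.
by rewrite (@eq_map _ _ _ id) ?map_id // => l /=; rewrite inv_letterK.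
Qed.

Lemma inv_word_cons (A : Type) (l : A * bool) (u : word A) :
  inv_word (l :: u) = inv_word u ++ [:: inv_letter l].
Proof. by rewrite -cat1s inv_word_cat. Qed.

Section GrpLemmas.
Local Notation E := grp_eq.

Lemma ge_catl (A : Type) (rel : word A -> Prop) w u v :
  E rel u v -> E rel (w ++ u) (w ++ v).
Proof. by move=> h; have := ge_ctx w [::] h; rewrite !cats0. Qed.

Lemma ge_catr (A : Type) (rel : word A -> Prop) w u v :
  E rel u v -> E rel (u ++ w) (v ++ w).
Proof. by move=> h; have := ge_ctx [::] w h. Qed.

Lemma ge_cat (A : Type) (rel : word A -> Prop) u u' v v' :
  E rel u u' -> E rel v v' -> E rel (u ++ v) (u' ++ v').
Proof.
move=> h1 h2; apply: ge_trans (ge_catr _ h1) _; exact: ge_catl.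
Qed.

Lemma ge_cons (A : Type) (rel : word A -> Prop) l u v :
  E rel u v -> E rel (l :: u) (l :: v).
Proof. exact: (ge_catl [:: l]). Qed.

Lemma ge_canc_mid (A : Type) (rel : word A -> Prop) a b l :
  E rel (a ++ l :: inv_letter l :: b) (a ++ b).
Proof.
by have := ge_ctx a b (ge_cancel rel l); rewrite /=.
Qed.

Lemma ge_invr (A : Type) (rel : word A -> Prop) w :
  E rel (w ++ inv_word w) [::].
Proof.
elim: w => [|l w IH] //=; first exact: ge_refl.
rewrite inv_word_cons catA -cat_cons.
apply: ge_trans (ge_catr _ (ge_cons l IH)) _ => /=.
exact: ge_cancel.
Qed.

Lemma ge_invl (A : Type) (rel : word A -> Prop) w :
  E rel (inv_word w ++ w) [::].
Proof. by have := ge_invr rel (inv_word w); rewrite inv_wordK. Qed.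

Lemma ge_inv (A : Type) (rel : word A -> Prop) u v :
  E rel u v -> E rel (inv_word u) (inv_word v).
Proof.
elim=> {u v}.
- move=> w; exact: ge_refl.
- move=> u v _ h; exact: ge_sym.
- move=> u v w _ h1 _ h2; exact: ge_trans h1 h2.
- move=> a b u v _ h; rewrite !inv_word_cat; apply: ge_catr; exact: ge_catl.
- move=> l; rewrite /inv_word /= inv_letterK.
  have -> : rev [:: inv_letter l; l] = [:: l; inv_letter l] by [].
  exact: ge_cancel.
- move=> r hr.
  have h1 := ge_catl (inv_word r) (ge_sym (ge_rel hr)).
  rewrite cats0 in h1; exact: ge_trans h1 (ge_invl _ _).
Qed.
End GrpLemmas.

Lemma ge_triv_eq (A : Type) (rel : word A -> Prop) u v :
  grp_eq rel (u ++ inv_word v) [::] -> grp_eq rel u v.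
Proof.
move=> h.
have h1 : grp_eq rel u (u ++ inv_word v ++ v).
  have := ge_catl u (ge_sym (ge_invl rel v)); by rewrite cats0.
apply: ge_trans h1 _; rewrite catA.
have := ge_catr v h; by [].
Qed.

Lemma ge_eq_triv (A : Type) (rel : word A -> Prop) u v :
  grp_eq rel u v -> grp_eq rel (u ++ inv_word v) [::].
Proof.
move=> h; apply: ge_trans (ge_catr _ h) _; exact: ge_invr.
Qed.

Lemma ge_invE (A : Type) (rel : word A -> Prop) u v :
  grp_eq rel (inv_word u) (inv_word v) -> grp_eq rel u v.
Proof. by move/ge_inv; rewrite !inv_wordK. Qed.

Lemma ge_invcat (A : Type) (rel : word A -> Prop) p g :
  grp_eq rel (inv_word p ++ g) [::] <-> grp_eq rel p g.
Proof.
split=> h.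
- have := ge_catl p (ge_sym h); rewrite cats0 catA => h1.
  apply: ge_trans h1 _; apply: ge_trans (ge_catr g (ge_invr _ p)) _; exact: ge_refl.
- exact: ge_trans (ge_catl _ (ge_sym h)) (ge_invl _ _).
Qed.

Definition Lop n (a : CG n) (f : word (sdgen n) -> CC) (g : word (sdgen n)) : CC :=
  \sum_(p <- a) p.1 * f (inv_word p.2 ++ g).

Definition Top n (A : cmx n) (x : 'I_n -> word (sdgen n) -> CC)
  (r : 'I_n) (g : word (sdgen n)) : CC :=
  \sum_(c < n) Lop (A r c) (x c) g.

Definition inv_fun n (f : word (sdgen n) -> CC) :=
  forall u v, G_eq u v -> f u = f v.
Definition Vinv n (x : 'I_n -> word (sdgen n) -> CC) := forall c, inv_fun (x c).

Lemma Lop_cat n (a b : CG n) f g : Lop (a ++ b) f g = Lop a f g + Lop b f g.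
Proof. by rewrite /Lop big_cat. Qed.

Lemma Lop_nil n f g : Lop (cg_zero n) f g = 0.
Proof. by rewrite /Lop big_nil. Qed.

Lemma Lop_mul n (a b : CG n) f g : Lop (cg_mul a b) f g = Lop a (Lop b f) g.
Proof.
rewrite /Lop /cg_mul big_allpairs_dep /=; apply: eq_bigr => p _.
rewrite big_distrr /=; apply: eq_bigr => q _.
by rewrite inv_word_cat -catA mulrA.
Qed.

Lemma Lop_of n (w : word (sdgen n)) f g : Lop (cg_of w) f g = f (inv_word w ++ g).
Proof. by rewrite /Lop big_seq1 mul1r. Qed.

Lemma Lop_scal n (c : CC) f g : Lop (cg_scal n c) f g = c * f g.
Proof. by rewrite /Lop big_seq1. Qed.

Lemma Lop_sum n (a : CG n) (F : 'I_n -> word (sdgen n) -> CC) g :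
  Lop a (fun w => \sum_(c < n) F c w) g = \sum_(c < n) Lop a (F c) g.
Proof.
rewrite /Lop exchange_big /=; apply: eq_bigr => p _; by rewrite big_distrr.
Qed.

Lemma Lop_ext n (a : CG n) f f' g : (forall w, f w = f' w) -> Lop a f g = Lop a f' g.
Proof. by move=> h; rewrite /Lop; apply: eq_bigr => p _; rewrite h. Qed.

Lemma Lop_foldr n (I : Type) (s : seq I) (F : I -> CG n) f g :
  Lop (foldr (@cg_add n) (cg_zero n) [seq F j | j <- s]) f g = \sum_(j <- s) Lop (F j) f g.
Proof.
elim: s => [|j s IH] /=; first by rewrite big_nil Lop_nil.
by rewrite /cg_add Lop_cat IH big_cons.
Qed.

Lemma Top_mul n (A B : cmx n) x r g : Top (cmx_mul A B) x r g = Top A (Top B x) r g.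
Proof.
rewrite /Top.
under eq_bigr => c _ do rewrite mxE Lop_foldr big_enum /=.
rewrite exchange_big /=; apply: eq_bigr => j _.
rewrite Lop_sum; apply: eq_bigr => c _; by rewrite Lop_mul.
Qed.

Lemma Top_one n x r g : Top (cmx_one n) x r g = x r g.
Proof.
rewrite /Top (bigD1 r) //= mxE eqxx Lop_scal mul1r big1 ?addr0 // => c hc.
by rewrite mxE eq_sym (negbTE hc) Lop_nil.
Qed.

Lemma Lop_inv n (a : CG n) f : inv_fun f -> inv_fun (Lop a f).
Proof.
move=> hf u v huv; rewrite /Lop; apply: eq_bigr => p _; congr (_ * _).
apply: hf; exact: ge_catl.
Qed.

Lemma Top_inv n (A : cmx n) x : Vinv x -> Vinv (Top A x).
Proof.
move=> hx r u v huv; rewrite /Top; apply: eq_bigr => c _; exact: Lop_inv.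
Qed.

Lemma G_sym n (u v : word (sdgen n)) : G_eq u v -> G_eq v u.
Proof. exact: ge_sym. Qed.
Lemma G_trans n (u v w : word (sdgen n)) : G_eq u v -> G_eq v w -> G_eq u w.
Proof. exact: ge_trans. Qed.

Lemma coef_filter n (s : CG n) h g :
  cg_coef [seq p <- s | ~~ `[< G_eq p.2 h >]] g =
  if `[< G_eq g h >] then 0 else cg_coef s g.
Proof.
rewrite /cg_coef big_filter_cond.
case: (boolP `[< G_eq g h >]) => /asboolP hgh.
- rewrite big_pred0 // => p; apply/negbTE; rewrite negb_and negbK.
  case: (boolP `[< G_eq p.2 g >]) => /asboolP hpg; rewrite ?orbT //.
  by rewrite orbF; apply/asboolP; apply: G_trans hpg hgh.
- apply: eq_bigl => p; case: (boolP `[< G_eq p.2 g >]) => /asboolP hpg.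
  + rewrite andbT; apply/negP => /asboolP hph; apply: hgh.
    exact: G_trans (G_sym hpg) hph.
  + by rewrite andbF.
Qed.

Lemma KL_aux n (F : word (sdgen n) -> CC) (hF : inv_fun F) :
  forall N (a b : CG n), (size a + size b <= N)%N -> cg_eq a b ->
  \sum_(p <- a) p.1 * F p.2 = \sum_(p <- b) p.1 * F p.2.
Proof.
elim=> [|N IH] a b.
  by rewrite leqn0 addn_eq0 => /andP[/nilP -> /nilP ->].
move=> hs hab.
case hnil : (a ++ b) => [|p0 s0].
  by move: hnil; case: a {hs hab} => [|? ?] //; case: b => [|? ?].
pose h := p0.2.
pose P := fun p : CC * word (sdgen n) => `[< G_eq p.2 h >].
have split_sum : forall s : CG n, \sum_(p <- s) p.1 * F p.2 =
    cg_coef s h * F h + \sum_(p <- [seq p <- s | ~~ P p]) p.1 * F p.2.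
  move=> s; rewrite (bigID P) /= big_filter; congr (_ + _).
  rewrite /cg_coef big_distrl /=; apply: eq_bigr => p /asboolP hp.
  by rewrite (hF _ _ hp).
rewrite (split_sum a) (split_sum b) hab; congr (_ + _); apply: IH.
- rewrite !size_filter.
  have hP : (0 < count P a + count P b)%N.
    rewrite -count_cat hnil /=.
    suff -> : P p0 = true by [].
    by apply/asboolP; exact: ge_refl.
  change (count (predC P) a + count (predC P) b <= N)%N.
  have := count_predC P a; have := count_predC P b.
  move: hs hP; lia.
- by move=> g; rewrite !coef_filter hab.
Qed.

Lemma KL n (a b : CG n) (F : word (sdgen n) -> CC) : inv_fun F -> cg_eq a b ->
  \sum_(p <- a) p.1 * F p.2 = \sum_(p <- b) p.1 * F p.2.
Proof. move=> hF; exact: (KL_aux hF (leqnn _)). Qed.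

Lemma cg_eq_Lop n (a b : CG n) f g : cg_eq a b -> inv_fun f -> Lop a f g = Lop b f g.
Proof.
move=> hab hf; rewrite /Lop; apply: (@KL n a b (fun w => f (inv_word w ++ g))) => // u v huv.
apply: hf.
apply: ge_catr; exact: ge_inv.
Qed.

Lemma cmx_eq_Top n (A B : cmx n) x r g : cmx_eq A B -> Vinv x -> Top A x r g = Top B x r g.
Proof.
move=> hAB hx; rewrite /Top; apply: eq_bigr => c _; apply: cg_eq_Lop => //; exact: hAB.
Qed.

Definition delta n (w : word (sdgen n)) : CC := if `[< G_eq w [::] >] then 1 else 0.

Lemma delta_inv n : inv_fun (@delta n).
Proof.
move=> u v huv; rewrite /delta.
have -> : `[< G_eq u [::] >] = `[< G_eq v [::] >] ; last by [].
apply/idP/idP => /asboolP h; apply/asboolP.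
- exact: G_trans (G_sym huv) h.
- exact: G_trans huv h.
Qed.

Lemma coef_Lop n (a : CG n) g : cg_coef a g = Lop a (@delta n) g.
Proof.
rewrite /cg_coef /Lop big_mkcond; apply: eq_bigr => p _.
rewrite /delta.
have -> : `[< G_eq (inv_word p.2 ++ g) [::] >] = `[< G_eq p.2 g >].
  by apply/idP/idP => /asboolP h; apply/asboolP; apply/ge_invcat.
by case: ifP; rewrite ?mulr1 ?mulr0.
Qed.

Lemma Top_cmx_eq n (A B : cmx n) :
  (forall x, Vinv x -> forall r g, Top A x r g = Top B x r g) -> cmx_eq A B.
Proof.
move=> h r c g; rewrite !coef_Lop.
pose x := fun (c' : 'I_n) (w : word (sdgen n)) => if c' == c then delta w else 0.
have hx : Vinv x.
  move=> c' u v huv; rewrite /x; case: eqP => // _; exact: delta_inv.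
have key : forall M : cmx n, Top M x r g = Lop (M r c) (@delta n) g.
  move=> M; rewrite /Top (bigD1 c) //= big1 ?addr0.
    by apply: Lop_ext => w; rewrite /x eqxx.
  move=> c' hc; rewrite /Lop big1 // => p _; by rewrite /x (negbTE hc) mulr0.
by rewrite -!key h.
Qed.

Definition mkg n (i j : 'I_n) (hij : i != j) : pwgen n :=
  exist (fun p : 'I_n * 'I_n => p.1 != p.2) (i, j) hij.

Lemma Lop_add_neg n (w : word (sdgen n)) f h :
  Lop (cg_add (cg_scal n 1) (cg_mul (cg_scal n (-1)) (cg_of w))) f h =
  f h - f (inv_word w ++ h).
Proof.
rewrite /cg_add Lop_cat Lop_scal Lop_mul Lop_scal Lop_of /=.
by rewrite mul1r mulN1r.
Qed.

Lemma TC n (i j : 'I_n) (hij : i != j) x r h :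
  Top (Cmx (mkg hij)) x r h =
  if r == i then
    x i ((SX j, true) :: (SXi (mkg hij), true) :: h) + x j ((SXi (mkg hij), true) :: h)
    - x j ((SX j, false) :: (SX i, true) :: (SX j, true) :: (SXi (mkg hij), true) :: h)
  else x r ((SXi (mkg hij), true) :: h).
Proof.
have hji : j != i by rewrite eq_sym.
rewrite /Top.
under eq_bigr => c _ do rewrite mxE Lop_mul Lop_of.
case: eqP => [->|hr].
- rewrite (bigD1 i) //= (bigD1 j) /=; last by rewrite eq_sym.
  rewrite big1 ?addr0.
    rewrite /Mmx !mxE !eqxx (negbTE hji) /= Lop_of Lop_add_neg /=.
    by rewrite addrA.
  move=> c /andP[hci hcj]; rewrite /Mmx mxE eqxx (negbTE hci) (negbTE hcj).
  by rewrite /Lop big_nil.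
- rewrite (bigD1 r) //= big1 ?addr0.
    have /eqP/negbTE hr' := hr.
    by rewrite /Mmx mxE hr' eqxx Lop_scal mul1r.
  move=> c hc; have /eqP/negbTE hr' := hr.
  by rewrite /Mmx mxE hr' eq_sym (negbTE hc) /Lop big_nil.
Qed.

Definition shift n (h : word (sdgen n)) (x : 'I_n -> word (sdgen n) -> CC) :=
  fun c u => x c (u ++ h).

Lemma Top_shift n (A : cmx n) x r w h : Top A (shift h x) r w = Top A x r (w ++ h).
Proof.
rewrite /Top; apply: eq_bigr => c _; rewrite /Lop; apply: eq_bigr => p _.
by rewrite /shift catA.
Qed.

Lemma Top_ext n (A : cmx n) x y r w : (forall c u, x c u = y c u) -> Top A x r w = Top A y r w.
Proof. move=> h; rewrite /Top; apply: eq_bigr => c _; exact: Lop_ext. Qed.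

Lemma shift_inv n h (x : 'I_n -> _) : Vinv x -> Vinv (shift h x).
Proof. move=> hx c u v huv; rewrite /shift; apply: hx; exact: ge_catr. Qed.

Lemma shift_Top n (A : cmx n) x h c u : shift h (Top A x) c u = Top A (shift h x) c u.
Proof. by rewrite Top_shift. Qed.

Definition canc n (l m : sdgen n * bool) : bool :=
  match l, m with
  | (SX a, b), (SX c, d) => (a == c) && (b != d)
  | (SXi a, b), (SXi c, d) => (a == c) && (b != d)
  | _, _ => false
  end.

Definition fred n (w : word (sdgen n)) : word (sdgen n) :=
  foldr (fun l acc => match acc with
                      | m :: acc' => if canc l m then acc' else l :: acc
                      | [::] => [:: l] end) [::] w.

Lemma canc_inv n (l m : sdgen n * bool) : canc l m -> m = inv_letter l.
Proof.
case: l m => [[a|a] b] [[c|c] d] //= /andP[/eqP <- hbd]; rewrite /inv_letter /=;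
  by case: b d hbd => [] [].
Qed.

Lemma fred_ok n (w : word (sdgen n)) : G_eq w (fred w).
Proof.
elim: w => [|l w IH] /=; first exact: ge_refl.
apply: G_trans (ge_cons l IH) _.
case: (fred w) => [|m acc]; first exact: ge_refl.
case: ifP => [/canc_inv ->|_]; last exact: ge_refl.
have := ge_canc_mid (@sd_rel n) [::] acc l; by [].
Qed.

Definition isX n (l : sdgen n * bool) : bool := if l.1 is SX _ then true else false.

Definition phiL n (a : pwgen n) (l : sdgen n * bool) : word (sdgen n) :=
  match l with
  | (SX k, false) => phiw (val a).1 (val a).2 k
  | (SX k, true) => inv_word (phiw (val a).1 (val a).2 k)
  | _ => [:: l]
  end.

Fixpoint nf n (w : word (sdgen n)) : word (sdgen n) * word (sdgen n) :=
  match w with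
  | [::] => ([::], [::])
  | l :: w' =>
    let p := nf w' in
    match l with
    | (SX _, _) => (l :: p.1, p.2)
    | (SXi a, true) => (flatten (map (phiL a) p.1), l :: p.2)
    | (SXi a, false) => ([::], l :: p.1 ++ p.2)
    end
  end.

Lemma all_isX_inv n (w : word (sdgen n)) : all (@isX n) w -> all (@isX n) (inv_word w).
Proof. by rewrite /inv_word all_rev all_map; apply: sub_all => -[[?|?] ?]. Qed.

Lemma phiw_X n (i j k : 'I_n) : all (@isX n) (phiw i j k).
Proof. by rewrite /phiw; case: ifP. Qed.

Lemma phiL_X n (a : pwgen n) (s : word (sdgen n)) :
  all (@isX n) s -> all (@isX n) (flatten (map (phiL a) s)).
Proof.
elim: s => [|l s IH] //= /andP[hl hs]; rewrite all_cat IH // andbT.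
case: l hl => [[k|a'] [|]] //= _; [exact/all_isX_inv/phiw_X | exact: phiw_X].
Qed.

Lemma nf_X n (w : word (sdgen n)) : all (@isX n) (nf w).1.
Proof.
elim: w => [|[[k|a] b] w IH] //=.
case: b => //=; exact: phiL_X.
Qed.

Lemma xiw_mkg n (i j : 'I_n) (hij : i != j) : xiw i j = gen_word (mkg hij).
Proof. by rewrite /xiw insubT. Qed.

Lemma push1 n (a : pwgen n) k :
  G_eq [:: (SXi a, true); (SX k, false)] (phiw (val a).1 (val a).2 k ++ [:: (SXi a, true)]).
Proof.
case: a => [[i j] hij] /=.
apply: ge_triv_eq; apply: ge_rel; right; exists i, j, k; split => //.
rewrite xiw_mkg inv_word_cat /=; by [].
Qed.

Lemma push1neg n (a : pwgen n) k :
  G_eq [:: (SXi a, true); (SX k, true)]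
       (inv_word (phiw (val a).1 (val a).2 k) ++ [:: (SXi a, true)]).
Proof.
set ph := phiw _ _ _.
have h1 := ge_inv (push1 a k); rewrite inv_word_cat /= in h1.
have s1 : G_eq [:: (SXi a, true); (SX k, true)]
            [:: (SXi a, true); (SX k, true); (SXi a, false); (SXi a, true)].
  apply: G_sym; have := ge_canc_mid (@sd_rel n) [:: (SXi a, true); (SX k, true)] [::] (SXi a, false).
  by [].
apply: G_trans s1 _.
have s2 := ge_ctx [:: (SXi a, true)] [:: (SXi a, true)] h1.
rewrite /= in s2; apply: G_trans s2 _.
have := ge_canc_mid (@sd_rel n) [::] (inv_word ph ++ [:: (SXi a, true)]) (SXi a, true).
exact: id.
Qed.

Lemma push n (a : pwgen n) (xs : word (sdgen n)) : all (@isX n) xs ->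
  G_eq ((SXi a, true) :: xs) (flatten (map (phiL a) xs) ++ [:: (SXi a, true)]).
Proof.
elim: xs => [|l xs IH] /=; first by move=> _; exact: ge_refl.
case: l => -[k|a'] b //= /IH {}IH.
have h0 : G_eq [:: (SXi a, true); (SX k, b)] (phiL a (SX k, b) ++ [:: (SXi a, true)]).
  by case: b; [exact: push1neg | exact: push1].
have := ge_catr xs h0; rewrite /= => h1; apply: G_trans h1 _.
rewrite -catA -catA; apply: ge_catl; exact: IH.
Qed.

Lemma nf_ok n (w : word (sdgen n)) : G_eq w ((nf w).1 ++ (nf w).2).
Proof.
elim: w => [|l w IH] /=; first exact: ge_refl.
case: l => -[k|a] b.
- exact: ge_cons.
- case: b.
  + apply: G_trans (ge_cons _ IH) _.
    have := ge_catr (nf w).2 (push a (nf_X w)); rewrite -catA; by [].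
  + exact: ge_cons.
Qed.

Definition xN n (x : 'I_n -> word (sdgen n) -> CC) c (p : word (sdgen n) * word (sdgen n)) :=
  x c (p.1 ++ p.2).
Arguments xN : simpl never.

Lemma xnf n (x : 'I_n -> word (sdgen n) -> CC) (hx : Vinv x) c w :
  x c w = xN x c (fred (nf w).1, (nf w).2).
Proof.
rewrite /xN /=; apply: hx; apply: G_trans (nf_ok w) _; apply: ge_catr; exact: fred_ok.
Qed.

Lemma xN_swap n (x : 'I_n -> word (sdgen n) -> CC) (hx : Vinv x) c u z z' :
  G_eq z z' -> xN x c (u, z) = xN x c (u, z').
Proof. by move=> h; rewrite /xN /=; apply: hx; apply: ge_catl. Qed.

Lemma xfred n (x : 'I_n -> word (sdgen n) -> CC) (hx : Vinv x) c w :
  x c w = xN x c (fred w, [::]).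
Proof. by rewrite /xN /= cats0; apply: hx; exact: fred_ok. Qed.

Lemma lift_mccool n r0 : mccool_rel r0 -> G_eq (@lift_pw n r0) [::].
Proof. by move=> h; apply: ge_rel; left; exists r0. Qed.

Lemma mc1 n (i j s t : 'I_n) (hij : i != j) (hst : s != t) :
  i != s -> i != t -> j != s -> j != t ->
  G_eq [:: (SXi (mkg hij), true); (SXi (mkg hst), true)]
       [:: (SXi (mkg hst), true); (SXi (mkg hij), true)].
Proof.
move=> his hit hjs hjt; apply: ge_triv_eq.
have := lift_mccool (r0 := comm_word (xiw i j) (xiw s t)).
rewrite !xiw_mkg; apply; left; exists i, j, s, t; split.
  by rewrite hij hst his hit hjs hjt.
by rewrite !xiw_mkg.
Qed.

Lemma mc2 n (i j k : 'I_n) (hij : i != j) (hkj : k != j) : i != k ->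
  G_eq [:: (SXi (mkg hij), true); (SXi (mkg hkj), true)]
       [:: (SXi (mkg hkj), true); (SXi (mkg hij), true)].
Proof.
move=> hik; apply: ge_triv_eq.
have := lift_mccool (r0 := comm_word (xiw i j) (xiw k j)).
rewrite !xiw_mkg; apply; right; left; exists i, j, k; split.
  by rewrite hij hik eq_sym hkj.
by rewrite !xiw_mkg.
Qed.

Lemma mc3 n (i j k : 'I_n) (hij : i != j) (hkj : k != j) (hik : i != k) :
  G_eq [:: (SXi (mkg hik), true); (SXi (mkg hkj), true); (SXi (mkg hij), true)]
       [:: (SXi (mkg hkj), true); (SXi (mkg hij), true); (SXi (mkg hik), true)].
Proof.
apply: ge_triv_eq; apply: ge_invE.
have := lift_mccool (r0 := comm_word (xiw i j ++ xiw k j) (xiw i k)).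
rewrite !xiw_mkg; apply; right; right; exists i, j, k; split.
  by rewrite hij hik eq_sym hkj.
by rewrite !xiw_mkg.
Qed.

Lemma shift2 n (A B : cmx n) x r h :
  Top A (Top B x) r h = Top A (Top B (shift h x)) r [::].
Proof.
rewrite -[h]/([::] ++ h) -Top_shift; apply: Top_ext => c u.
by rewrite shift_Top.
Qed.

Lemma shift3 n (A B C : cmx n) x r h :
  Top A (Top B (Top C x)) r h = Top A (Top B (Top C (shift h x))) r [::].
Proof.
rewrite -[h]/([::] ++ h) -Top_shift; apply: Top_ext => c u.
rewrite shift_Top; apply: Top_ext => c' u'; by rewrite shift_Top.
Qed.




Lemma R3 n (i j k : 'I_n) (hij : i != j) (hkj : k != j) (hik : i != k) x (hx : Vinv x) r h :
  Top (Cmx (mkg hij)) (Top (Cmx (mkg hkj)) (Top (Cmx (mkg hik)) x)) r h =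
  Top (Cmx (mkg hik)) (Top (Cmx (mkg hij)) (Top (Cmx (mkg hkj)) x)) r h.
Proof.
rewrite (shift3 _ _ _ x r h) (shift3 _ _ _ x r h); move: (shift h x) (shift_inv h hx) => {x hx} x hx.
have hji : j != i by rewrite eq_sym.
have hjk : j != k by rewrite eq_sym.
have hki : k != i by rewrite eq_sym.
rewrite !TC.
have e1 := negbTE hij; have e2 := negbTE hji; have e3 := negbTE hkj.
have e4 := negbTE hjk; have e5 := negbTE hik; have e6 := negbTE hki.
have [ri|ri] := eqVneq r i; last have [rk|rk] := eqVneq r k.
all: try subst r.
all: rewrite ?eqxx ?e1 ?e2 ?e3 ?e4 ?e5 ?e6 !(xnf hx).
all: do 20 (rewrite /phiw /inv_word /xw /inv_letter /= ?eqxx ?e1 ?e2 ?e3 ?e4 ?e5 ?e6).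
all: rewrite !(xN_swap hx _ _ (mc3 hij hkj hik)).
all: ring.
Qed.

Lemma R1 n (i j s t : 'I_n) (hij : i != j) (hst : s != t)
  (his : i != s) (hit : i != t) (hjs : j != s) (hjt : j != t) x (hx : Vinv x) r h :
  Top (Cmx (mkg hij)) (Top (Cmx (mkg hst)) x) r h =
  Top (Cmx (mkg hst)) (Top (Cmx (mkg hij)) x) r h.
Proof.
rewrite (shift2 _ _ x r h) (shift2 _ _ x r h); move: (shift h x) (shift_inv h hx) => {x hx} x hx.
have e1 := negbTE hij; have e2 := negbTE hst; have e3 := negbTE his.
have e4 := negbTE hit; have e5 := negbTE hjs; have e6 := negbTE hjt.
have f1 : (j == i) = false by rewrite eq_sym.
have f2 : (t == s) = false by rewrite eq_sym.
have f3 : (s == i) = false by rewrite eq_sym.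
have f4 : (t == i) = false by rewrite eq_sym.
have f5 : (s == j) = false by rewrite eq_sym.
have f6 : (t == j) = false by rewrite eq_sym.
rewrite !TC.
have [ri|ri] := eqVneq r i; last have [rs|rs] := eqVneq r s.
all: try subst r.
all: rewrite ?eqxx ?e1 ?e2 ?e3 ?e4 ?e5 ?e6 ?f1 ?f2 ?f3 ?f4 ?f5 ?f6 !(xnf hx).
all: do 20 (rewrite /phiw /inv_word /xw /inv_letter /= ?eqxx ?e1 ?e2 ?e3 ?e4 ?e5 ?e6 ?f1 ?f2 ?f3 ?f4 ?f5 ?f6).
all: rewrite !(xN_swap hx _ _ (mc1 hst hij (negbT f3) (negbT f5) (negbT f4) (negbT f6))).
all: ring.
Qed.

Lemma R2 n (i j k : 'I_n) (hij : i != j) (hkj : k != j) (hik : i != k) x (hx : Vinv x) r h :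
  Top (Cmx (mkg hij)) (Top (Cmx (mkg hkj)) x) r h =
  Top (Cmx (mkg hkj)) (Top (Cmx (mkg hij)) x) r h.
Proof.
rewrite (shift2 _ _ x r h) (shift2 _ _ x r h); move: (shift h x) (shift_inv h hx) => {x hx} x hx.
have hji : j != i by rewrite eq_sym.
have hjk : j != k by rewrite eq_sym.
have hki : k != i by rewrite eq_sym.
have e1 := negbTE hij; have e2 := negbTE hji; have e3 := negbTE hkj.
have e4 := negbTE hjk; have e5 := negbTE hik; have e6 := negbTE hki.
rewrite !TC.
have [ri|ri] := eqVneq r i; last have [rk|rk] := eqVneq r k.
all: try subst r.
all: rewrite ?eqxx ?e1 ?e2 ?e3 ?e4 ?e5 ?e6 !(xnf hx).
all: do 20 (rewrite /phiw /inv_word /xw /inv_letter /= ?eqxx ?e1 ?e2 ?e3 ?e4 ?e5 ?e6).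
all: rewrite !(xN_swap hx _ _ (mc2 hkj hij hki)).
all: ring.
Qed.

Definition Minv n (i j : 'I_n) : cmx n :=
  \matrix_(r, c)
    if r == i then
      (if c == i then cg_of (inv_word (xw j))
       else if c == j then
         cg_add (cg_mul (cg_scal n (-1)) (cg_of (inv_word (xw j)))) (cg_of (xw i ++ inv_word (xw j)))
       else cg_zero n)
    else (if r == c then cg_scal n 1 else cg_zero n).

Definition Dm n (g : pwgen n) : cmx n :=
  let i := (val g).1 in let j := (val g).2 in
  \matrix_(r, c) cg_mul (Minv i j r c) (cg_of (inv_word (lift_pw (gen_word g)))).

Lemma LopN n (w1 w2 : word (sdgen n)) f h :
  Lop (cg_add (cg_mul (cg_scal n (-1)) (cg_of w1)) (cg_of w2)) f h =
  - f (inv_word w1 ++ h) + f (inv_word w2 ++ h).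
Proof.
rewrite /cg_add Lop_cat Lop_mul Lop_scal !Lop_of.
by rewrite mulN1r.
Qed.

Lemma TD n (i j : 'I_n) (hij : i != j) x r h :
  Top (Dm (mkg hij)) x r h =
  if r == i then
    x i ((SXi (mkg hij), false) :: (SX j, false) :: h)
    - x j ((SXi (mkg hij), false) :: (SX j, false) :: h)
    + x j ((SXi (mkg hij), false) :: (SX j, false) :: (SX i, true) :: h)
  else x r ((SXi (mkg hij), false) :: h).
Proof.
have hji : j != i by rewrite eq_sym.
rewrite /Top.
under eq_bigr => c _ do rewrite mxE Lop_mul.
have LL : forall (m : CG n) f h', Lop m (Lop (cg_of (inv_word (lift_pw (gen_word (mkg hij))))) f) h'
    = Lop m (fun w => f ((SXi (mkg hij), false) :: w)) h'.
  by move=> m f h'; apply: Lop_ext => w; rewrite Lop_of.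
under eq_bigr => c _ do rewrite LL.
case: eqP => [->|hr].
- rewrite (bigD1 i) //= (bigD1 j) /=; last by rewrite eq_sym.
  rewrite big1 ?addr0.
    rewrite /Minv !mxE !eqxx (negbTE hji) LopN !Lop_of /=.
    by rewrite addrA.
  move=> c /andP[hci hcj]; rewrite /Minv mxE eqxx (negbTE hci) (negbTE hcj).
  by rewrite /Lop big_nil.
- rewrite (bigD1 r) //= big1 ?addr0.
    have /eqP/negbTE hr' := hr.
    by rewrite /Minv mxE hr' eqxx Lop_scal mul1r.
  move=> c hc; have /eqP/negbTE hr' := hr.
  by rewrite /Minv mxE hr' eq_sym (negbTE hc) /Lop big_nil.
Qed.

Lemma CD n (i j : 'I_n) (hij : i != j) x (hx : Vinv x) r h :
  Top (Cmx (mkg hij)) (Top (Dm (mkg hij)) x) r h = x r h.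
Proof.
rewrite (shift2 _ _ x r h); have -> : x r h = shift h x r [::] by [].
move: (shift h x) (shift_inv h hx) => {x hx} x hx.
have e1 := negbTE hij; have e2 : (j == i) = false by rewrite eq_sym.
rewrite !TC !TD.
have [ri|ri] := eqVneq r i.
all: try subst r.
all: rewrite ?eqxx ?e1 ?e2 !(xfred hx).
all: do 10 (rewrite /= ?eqxx ?e1 ?e2).
all: ring.
Qed.

Lemma DC n (i j : 'I_n) (hij : i != j) x (hx : Vinv x) r h :
  Top (Dm (mkg hij)) (Top (Cmx (mkg hij)) x) r h = x r h.
Proof.
rewrite (shift2 _ _ x r h); have -> : x r h = shift h x r [::] by [].
move: (shift h x) (shift_inv h hx) => {x hx} x hx.
have e1 := negbTE hij; have e2 : (j == i) = false by rewrite eq_sym.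
rewrite !TD !TC.
have [ri|ri] := eqVneq r i.
all: try subst r.
all: rewrite ?eqxx ?e1 ?e2 !(xfred hx).
all: do 10 (rewrite /= ?eqxx ?e1 ?e2).
all: ring.
Qed.

Definition projl n (l : sdgen n * bool) : word (pwgen n) :=
  match l.1 with SX _ => [::] | SXi a => [:: (a, l.2)] end.
Definition proj n (w : word (sdgen n)) : word (pwgen n) := flatten (map (@projl n) w).

Lemma proj_cat n (u v : word (sdgen n)) : proj (u ++ v) = proj u ++ proj v.
Proof. by rewrite /proj map_cat flatten_cat. Qed.

Lemma proj_inv n (w : word (sdgen n)) : proj (inv_word w) = inv_word (proj w).
Proof.
elim: w => [|l w IH] //.
rewrite inv_word_cons proj_cat IH -[l :: w]cat1s proj_cat inv_word_cat.
by congr (_ ++ _); case: l => -[k|a] b.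
Qed.

Lemma proj_lift n (w : word (pwgen n)) : proj (lift_pw w) = w.
Proof. by elim: w => [|[a b] w IH] //=; rewrite /proj /= in IH *; rewrite IH. Qed.

Lemma proj_phiw n (i j k : 'I_n) : proj (phiw i j k) = [::].
Proof. by rewrite /phiw; case: ifP. Qed.

Lemma proj_G n (u v : word (sdgen n)) : G_eq u v -> PW_eq (proj u) (proj v).
Proof.
elim=> {u v}.
- move=> w; exact: ge_refl.
- move=> u v _ h; exact: ge_sym.
- move=> u v w _ h1 _ h2; exact: ge_trans h1 h2.
- move=> a b u v _ h; rewrite !proj_cat; apply: ge_catl; exact: ge_catr.
- move=> [[k|a] b]; rewrite /proj /=; first exact: ge_refl.
  exact: (ge_cancel _ (a, b)).
- move=> r [[r0 [hr0 ->]]|[i [j [k [hij ->]]]]].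
  + rewrite proj_lift; exact: ge_rel.
  + rewrite !proj_cat !proj_inv proj_lift proj_phiw /= cats0.
    exact: ge_invl.
Qed.

Definition Pinv n (f : word (sdgen n) -> CC) :=
  forall u v, PW_eq (proj u) (proj v) -> f u = f v.

Lemma Pinv_inv n (f : word (sdgen n) -> CC) : Pinv f -> inv_fun f.
Proof. move=> hf u v huv; apply: hf; exact: proj_G. Qed.

Lemma Cmx_P n (g : pwgen n) (y : 'I_n -> word (sdgen n) -> CC) :
  (forall c, Pinv (y c)) -> forall r h, Top (Cmx g) y r h = y r ((SXi g, true) :: h).
Proof.
move=> hy r h; case: g => [[i j] hij].
have -> : exist (fun p : 'I_n * 'I_n => p.1 != p.2) (i, j) hij = mkg hij by [].
rewrite TC; case: eqP => [->|//].
have -> : y j [:: (SX j, false), (SX i, true), (SX j, true), (SXi (mkg hij), true) & h]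
        = y j ((SXi (mkg hij), true) :: h) by apply: hy; exact: ge_refl.
have -> : y i [:: (SX j, true), (SXi (mkg hij), true) & h]
        = y i ((SXi (mkg hij), true) :: h) by apply: hy; exact: ge_refl.
by rewrite addrK.
Qed.



Definition HDprop n (Dinv : pwgen n -> cmx n) := forall g : pwgen n,
  cmx_eq (cmx_mul (Cmx g) (Dinv g)) (cmx_one n) /\
  cmx_eq (cmx_mul (Dinv g) (Cmx g)) (cmx_one n).

Lemma HCD n (Dinv : pwgen n -> cmx n) (HD : HDprop Dinv) g x (hx : Vinv x) :
  Top (Cmx g) (Top (Dinv g) x) = x.
Proof.
apply: funext => r; apply: funext => h.
by rewrite -Top_mul (cmx_eq_Top _ _ (HD g).1 hx) Top_one.
Qed.

Lemma HDC n (Dinv : pwgen n -> cmx n) (HD : HDprop Dinv) g x (hx : Vinv x) :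
  Top (Dinv g) (Top (Cmx g) x) = x.
Proof.
apply: funext => r; apply: funext => h.
by rewrite -Top_mul (cmx_eq_Top _ _ (HD g).2 hx) Top_one.
Qed.

Lemma PinvV n (y : 'I_n -> word (sdgen n) -> CC) : (forall c, Pinv (y c)) -> Vinv y.
Proof. move=> hy c; exact: Pinv_inv. Qed.

Lemma Dinv_P n (Dinv : pwgen n -> cmx n) (HD : HDprop Dinv) g
  (y : 'I_n -> word (sdgen n) -> CC) :
  (forall c, Pinv (y c)) -> forall r h, Top (Dinv g) y r h = y r ((SXi g, false) :: h).
Proof.
move=> hy r h.
pose z := fun c w => y c ((SXi g, false) :: w).
have hz : forall c, Pinv (z c).
  move=> c u v huv; apply: hy; rewrite /proj /=; exact: ge_cons.
have e : forall c w, Top (Cmx g) z c w = y c w.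
  move=> c w; rewrite (Cmx_P g hz) /z; apply: hy; rewrite /proj /=.
  exact: (ge_ctx [::] _ (ge_cancel _ (g, false))).
rewrite (Top_ext _ _ _ (fun c w => esym (e c w))) (HDC HD _ (PinvV hz)).
by [].
Qed.

Lemma Psi_P n (Dinv : pwgen n -> cmx n) (HD : HDprop Dinv) (u : word (pwgen n))
  (y : 'I_n -> word (sdgen n) -> CC) :
  (forall c, Pinv (y c)) -> forall r h, Top (Psi_word Dinv u) y r h = y r (inv_word (lift_pw u) ++ h).
Proof.
move=> hy; elim: u => [|l u IH] r h /=; first by rewrite Top_one.
rewrite Top_mul (Top_ext _ _ _ (fun c w => IH c w)).
have hy' : forall c, Pinv (fun w => y c (inv_word (lift_pw u) ++ w)).
  move=> c v1 v2 hv; apply: hy; rewrite !proj_cat; exact: ge_catl.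
rewrite inv_word_cons -catA /=.
case: l => a [] /=.
- by rewrite (Dinv_P HD _ hy').
- by rewrite (Cmx_P _ hy').
Qed.

Lemma TopPsi_cons n (Dinv : pwgen n -> cmx n) l u x :
  Top (Psi_word Dinv (l :: u)) x =
  Top (if l.2 then Dinv l.1 else Cmx l.1) (Top (Psi_word Dinv u) x).
Proof. by apply: funext => r; apply: funext => h; rewrite /= Top_mul. Qed.

Lemma TopPsi_nil n (Dinv : pwgen n -> cmx n) x : Top (Psi_word Dinv [::]) x = x.
Proof. by apply: funext => r; apply: funext => h; rewrite /= Top_one. Qed.

Lemma TopPsi_cat n (Dinv : pwgen n -> cmx n) a b x :
  Top (Psi_word Dinv (a ++ b)) x = Top (Psi_word Dinv a) (Top (Psi_word Dinv b) x).
Proof.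
elim: a => [|l a IH] /=; first by rewrite TopPsi_nil.
by rewrite !TopPsi_cons IH.
Qed.

Lemma TopPsi_gen n (Dinv : pwgen n -> cmx n) g x :
  Top (Psi_word Dinv (gen_word g)) x = Top (Cmx g) x.
Proof. by rewrite TopPsi_cons TopPsi_nil. Qed.

Lemma TopPsi_ginv n (Dinv : pwgen n -> cmx n) g x :
  Top (Psi_word Dinv (inv_word (gen_word g))) x = Top (Dinv g) x.
Proof. by rewrite TopPsi_cons TopPsi_nil. Qed.

Lemma Psi_fwd n (Dinv : pwgen n -> cmx n) (HD : HDprop Dinv) u v :
  PW_eq u v -> forall x, Vinv x -> Top (Psi_word Dinv u) x = Top (Psi_word Dinv v) x.
Proof.
elim=> {u v}.
- by [].
- by move=> u v _ h x hx; rewrite h.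
- by move=> u v w _ h1 _ h2 x hx; rewrite h1 // h2.
- move=> a b u v _ h x hx; rewrite !TopPsi_cat h //; exact: Top_inv.
- move=> [g b] x hx; rewrite !TopPsi_cons TopPsi_nil /=.
  case: b => /=; [exact: HDC | exact: HCD].
- move=> r hr x hx; rewrite TopPsi_nil.
  case: hr => [[i [j [s [t [hc ->]]]]]|[[i [j [k [hc ->]]]]|[i [j [k [hc ->]]]]]].
  + move: hc => /and5P[hij hst his hit /andP[hjs hjt]].
    rewrite !xiw_mkg /comm_word !TopPsi_cat !TopPsi_gen !TopPsi_ginv.
    have e : Top (Cmx (mkg hij)) (Top (Cmx (mkg hst)) x) =
             Top (Cmx (mkg hst)) (Top (Cmx (mkg hij)) x).
      by apply: funext => r0; apply: funext => h0; exact: R1.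
    rewrite e (HDC HD _ (Top_inv _ hx)); exact: HDC.
  + move: hc => /and3P[hij hjk hik].
    have hkj : k != j by rewrite eq_sym.
    rewrite !xiw_mkg /comm_word !TopPsi_cat !TopPsi_gen !TopPsi_ginv.
    have e : Top (Cmx (mkg hij)) (Top (Cmx (mkg hkj)) x) =
             Top (Cmx (mkg hkj)) (Top (Cmx (mkg hij)) x).
      by apply: funext => r0; apply: funext => h0; exact: R2.
    rewrite e (HDC HD _ (Top_inv _ hx)); exact: HDC.
  + move: hc => /and3P[hij hjk hik].
    have hkj : k != j by rewrite eq_sym.
    rewrite (xiw_mkg hij) (xiw_mkg hkj) (xiw_mkg hik) /comm_word inv_word_cat !TopPsi_cat !TopPsi_gen !TopPsi_ginv.
    have e : Top (Cmx (mkg hij)) (Top (Cmx (mkg hkj)) (Top (Cmx (mkg hik)) x)) =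
             Top (Cmx (mkg hik)) (Top (Cmx (mkg hij)) (Top (Cmx (mkg hkj)) x)).
      by apply: funext => r0; apply: funext => h0; exact: R3.
    rewrite e (HDC HD _ (Top_inv _ (Top_inv _ hx))) (HDC HD _ (Top_inv _ hx)).
    exact: HDC.
Qed.

Local Close Scope ring_scope.

Theorem theorem3p3 (n : nat) (hn : 2 <= n) :
  (forall g : pwgen n, exists D : cmx n,
      cmx_eq (cmx_mul (Cmx g) D) (cmx_one n) /\
      cmx_eq (cmx_mul D (Cmx g)) (cmx_one n)) /\
  (forall Dinv : pwgen n -> cmx n,
      (forall g : pwgen n,
          cmx_eq (cmx_mul (Cmx g) (Dinv g)) (cmx_one n) /\
          cmx_eq (cmx_mul (Dinv g) (Cmx g)) (cmx_one n)) ->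
      forall u v : word (pwgen n),
        PW_eq u v <-> cmx_eq (Psi_word Dinv u) (Psi_word Dinv v)).
Proof.
split.
  case=> -[i j] hij; exists (Dm (mkg hij)); split; apply: Top_cmx_eq => x hx r h;
    rewrite Top_mul Top_one; [exact: CD | exact: DC].
move=> Dinv HD u v; split.
  move=> huv; apply: Top_cmx_eq => x hx r g; by rewrite (Psi_fwd HD huv hx).
move=> hc.
pose y := fun (c : 'I_n) (w : word (sdgen n)) =>
  if `[< PW_eq (proj w) (inv_word u) >] then (1 : CC)%R else 0%R.
have hy : forall c, Pinv (y c).
  move=> c u1 u2 h12; rewrite /y.
  have -> : `[< PW_eq (proj u1) (inv_word u) >] = `[< PW_eq (proj u2) (inv_word u) >];
    last by [].
  apply/idP/idP => /asboolP h; apply/asboolP.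
  - exact: ge_trans (ge_sym h12) h.
  - exact: ge_trans h12 h.
have r0 : 'I_n := Ordinal (ltnW hn).
have := cmx_eq_Top r0 [::] hc (PinvV hy).
rewrite !(Psi_P HD _ hy) !cats0 /y !proj_inv !proj_lift.
rewrite (asboolT (ge_refl _ _)).
case: (boolP `[< PW_eq (inv_word v) (inv_word u) >]) => [/asboolP h _|_].
  exact: ge_invE (ge_sym h).
move/eqP; by rewrite oner_eq0.
Qed.
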